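(* There exist a compact metric space $X$ and a homeomorphism $f\colon X\to X$ such that $\mathrm{SProx}(f)=\Delta_X$ but $\mathrm{Prox}(f)\ne\Delta_X$.
   Context: $\Delta_X=\{(x,x):x\in X\}$. $\mathrm{Prox}(f)=\{(x,y):\liminf_{n\to\infty} d(f^nx,f^ny)=0\}$; $\mathrm{SProx}(f)=\{(x,y):\{n\in\mathbb N:d(f^nx,f^ny)<\varepsilon\}$ is syndetic for every $\varepsilon>0\}$, where a subset of $\mathbb N$ is syndetic if it meets every subset of $\mathbb N$ containing arbitrarily long runs of consecutive integers. *)

(* Defs.v *)
From Stdlib Require Import Reals List.
Open Scope R_scope.

Notation MS := Metric_Space.

Definition is_open {X : MS} (U : Base X -> Prop) : Prop :=
  forall x, U x -> exists r, r > 0 /\ forall y, dist X x y < r -> U y.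

Definition compact_space (X : MS) : Prop :=
  forall (I : Type) (U : I -> Base X -> Prop),
    (forall i, is_open (U i)) -> (forall x, exists i, U i x) ->
    exists l : list I, forall x, exists i, In i l /\ U i x.

Definition continuous_map {X Y : MS} (f : Base X -> Base Y) : Prop :=
  forall x eps, eps > 0 -> exists delta, delta > 0 /\
    forall y, dist X x y < delta -> dist Y (f x) (f y) < eps.

Definition homeomorphism {X : MS} (f : Base X -> Base X) : Prop :=
  exists g : Base X -> Base X,
    (forall x, g (f x) = x) /\ (forall y, f (g y) = y) /\
    continuous_map f /\ continuous_map g.

Definition thick (T : nat -> Prop) : Prop :=
  forall L : nat, exists a : nat, forall k, (k < L)%nat -> T (a + k)%nat.

Definition syndetic (S : nat -> Prop) : Prop :=
  forall T, thick T -> exists n, S n /\ T n.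

(* (x,y) in Prox(f): liminf_n d(f^n x, f^n y) = 0 *)
Definition Prox {X : MS} (f : Base X -> Base X) (x y : Base X) : Prop :=
  forall eps, eps > 0 -> forall N : nat, exists n, (N <= n)%nat /\
    dist X (Nat.iter n f x) (Nat.iter n f y) < eps.

Definition SProx {X : MS} (f : Base X -> Base X) (x y : Base X) : Prop :=
  forall eps, eps > 0 ->
    syndetic (fun n => dist X (Nat.iter n f x) (Nat.iter n f y) < eps).

(* Main.v *)
Require Import Defs.
From Stdlib Require Import Reals List Lra Lia Psatz ZArith ProofIrrelevance Classical IndefiniteDescription.
Open Scope R_scope.

Definition nrm (t : R) : R := Rmin (IZR (up t) - t) (t - (IZR (up t) - 1)).

Lemma up_bounds t : IZR (up t) - 1 <= t < IZR (up t).
Proof. destruct (archimed t); lra. Qed.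

Lemma nrm_le t z : nrm t <= Rabs (t - IZR z).
Proof.
  unfold nrm. pose proof (up_bounds t).
  destruct (Z_le_gt_dec (up t) z) as [H1|H1].
  - apply IZR_le in H1. rewrite Rabs_left1 by lra.
    apply Rle_trans with (IZR (up t) - t); [apply Rmin_l|lra].
  - assert (z <= up t - 1)%Z by lia. apply IZR_le in H0.
    rewrite minus_IZR in H0. simpl in H0.
    rewrite Rabs_right by lra.
    apply Rle_trans with (t - (IZR (up t) - 1)); [apply Rmin_r|lra].
Qed.

Lemma nrm_att t : exists z, nrm t = Rabs (t - IZR z).
Proof.
  unfold nrm. pose proof (up_bounds t).
  destruct (Rle_dec (IZR (up t) - t) (t - (IZR (up t) - 1))).
  - exists (up t). rewrite Rmin_left by lra. rewrite Rabs_left1 by lra. lra.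
  - exists (up t - 1)%Z. rewrite Rmin_right by lra. rewrite minus_IZR.
    simpl. rewrite Rabs_right by lra. lra.
Qed.

Lemma nrm_pos t : 0 <= nrm t.
Proof. destruct (nrm_att t) as [z ->]. apply Rabs_pos. Qed.

Lemma nrm_abs t : nrm t <= Rabs t.
Proof. pose proof (nrm_le t 0). simpl in H. rewrite Rminus_0_r in H. exact H. Qed.

Lemma nrm_tri s t : nrm (s + t) <= nrm s + nrm t.
Proof.
  destruct (nrm_att s) as [a Ha]. destruct (nrm_att t) as [b Hb].
  rewrite Ha, Hb. apply Rle_trans with (Rabs (s + t - IZR (a + b))).
  apply nrm_le. rewrite plus_IZR.
  replace (s + t - (IZR a + IZR b)) with ((s - IZR a) + (t - IZR b)) by ring.
  apply Rabs_triang.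
Qed.

Lemma nrm_shift t z : nrm (t + IZR z) = nrm t.
Proof.
  apply Rle_antisym.
  - destruct (nrm_att t) as [a Ha]. rewrite Ha.
    replace (t - IZR a) with (t + IZR z - IZR (a + z)) by (rewrite plus_IZR; ring).
    apply nrm_le.
  - destruct (nrm_att (t + IZR z)) as [a Ha]. rewrite Ha.
    replace (t + IZR z - IZR a) with (t - IZR (a - z)) by (rewrite minus_IZR; ring).
    apply nrm_le.
Qed.

Lemma nrm_opp t : nrm (- t) = nrm t.
Proof.
  apply Rle_antisym.
  - destruct (nrm_att t) as [a Ha]. rewrite Ha.
    replace (t - IZR a) with (- (- t - IZR (- a))) by (rewrite opp_IZR; ring).
    rewrite Rabs_Ropp. apply nrm_le.
  - destruct (nrm_att (-t)) as [a Ha]. rewrite Ha.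
    replace (- t - IZR a) with (- (t - IZR (- a))) by (rewrite opp_IZR; ring).
    rewrite Rabs_Ropp. apply nrm_le.
Qed.

Lemma nrm_sym s t : nrm (s - t) = nrm (t - s).
Proof. replace (s - t) with (- (t - s)) by ring. apply nrm_opp. Qed.

Lemma nrm_lip s t : Rabs (nrm s - nrm t) <= Rabs (s - t).
Proof.
  apply Rabs_le. split.
  - pose proof (nrm_tri t (s - t)). replace (t + (s - t)) with s in H by ring.
    pose proof (nrm_tri s (t - s)). replace (s + (t - s)) with t in H0 by ring.
    pose proof (nrm_abs (t - s)). rewrite <- Rabs_Ropp in H1.
    replace (- (t - s)) with (s - t) in H1 by ring.
    pose proof (Rle_abs (s - t)). lra.
  - pose proof (nrm_tri t (s - t)). replace (t + (s - t)) with s in H by ring.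
    pose proof (nrm_abs (s - t)). lra.
Qed.

Lemma nrm_zero t : nrm t = 0 -> exists z, t = IZR z.
Proof.
  intro H. destruct (nrm_att t) as [a Ha]. exists a. rewrite H in Ha.
  symmetry in Ha. destruct (Req_dec (t - IZR a) 0); [lra|]. apply Rabs_no_R0 in H0. contradiction.
Qed.

Lemma nrm_int z : nrm (IZR z) = 0.
Proof.
  apply Rle_antisym. pose proof (nrm_le (IZR z) z). rewrite Rminus_diag, Rabs_R0 in H. exact H.
  apply nrm_pos.
Qed.

Lemma nrm_quarter t (J : Z) : IZR J + /4 <= t <= IZR J + 3/4 -> /4 <= nrm t.
Proof.
  intros H. destruct (nrm_att t) as [a ->].
  destruct (Z_le_gt_dec a J) as [H1|H1].
  - apply IZR_le in H1. rewrite Rabs_right by lra. lra.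
  - assert (J + 1 <= a)%Z by lia. apply IZR_le in H0. rewrite plus_IZR in H0. simpl in H0.
    rewrite Rabs_left1 by lra. lra.
Qed.

Definition fr (t : R) : R := t - (IZR (up t) - 1).

Lemma fr_range t : 0 <= fr t < 1.
Proof. unfold fr. pose proof (up_bounds t). lra. Qed.

Lemma fr_int t : exists z, fr t = t + IZR z.
Proof. exists (1 - up t)%Z. unfold fr. rewrite minus_IZR. simpl. ring. Qed.

Lemma unit_int_eq a b z : 0 <= a < 1 -> 0 <= b < 1 -> a = b + IZR z -> a = b.
Proof.
  intros Ha Hb E. assert (IZR z < 1) by lra. assert (-1 < IZR z) by lra.
  apply lt_IZR in H. apply lt_IZR in H0. assert (z = 0%Z) by lia. rewrite H1 in E. simpl in E. lra.
Qed.

Definition alpha : R := sqrt 2.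
Definition idx (n : Z) : Z := Z.abs (3 * n + 1).
Definition r (n : Z) : R := / IZR (idx n).
Definition th (n : Z) : R := IZR n * alpha + sqrt (IZR n).
Definition Circ := {a : R | 0 <= a < 1}.
Definition Pt := (Z + Circ)%type.
Definition emb (x : Pt) : R * R :=
  match x with inl n => (r n, th n) | inr a => (0, proj1_sig a) end.
Definition d (x y : Pt) : R :=
  Rabs (fst (emb x) - fst (emb y)) + nrm (snd (emb x) - snd (emb y)).

Lemma idx_pos n : (1 <= idx n)%Z.
Proof. unfold idx. lia. Qed.
Lemma idx_ge n : (Z.abs n <= idx n)%Z.
Proof. unfold idx. lia. Qed.
Lemma idx_inj n m : idx n = idx m -> n = m.
Proof. unfold idx. lia. Qed.

Lemma IZR_idx_pos n : 1 <= IZR (idx n).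
Proof. apply IZR_le, idx_pos. Qed.

Lemma r_pos n : 0 < r n.
Proof. unfold r. pose proof (IZR_idx_pos n). apply Rinv_0_lt_compat. lra. Qed.

Lemma d_pos x y : d x y >= 0.
Proof. unfold d. pose proof (Rabs_pos (fst (emb x) - fst (emb y))). pose proof (nrm_pos (snd (emb x) - snd (emb y))). lra. Qed.

Lemma d_sym x y : d x y = d y x.
Proof. unfold d. rewrite Rabs_minus_sym, nrm_sym. reflexivity. Qed.

Lemma d_tri x y z : d x y <= d x z + d z y.
Proof.
  unfold d.
  pose proof (Rabs_triang (fst (emb x) - fst (emb z)) (fst (emb z) - fst (emb y))).
  pose proof (nrm_tri (snd (emb x) - snd (emb z)) (snd (emb z) - snd (emb y))).
  replace (fst (emb x) - fst (emb z) + (fst (emb z) - fst (emb y))) with (fst (emb x) - fst (emb y)) in H by ring.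
  replace (snd (emb x) - snd (emb z) + (snd (emb z) - snd (emb y))) with (snd (emb x) - snd (emb y)) in H0 by ring.
  lra.
Qed.

Lemma circ_eq (a b : Circ) : proj1_sig a = proj1_sig b -> a = b.
Proof.
  destruct a as [a Ha], b as [b Hb]; simpl; intros ->. f_equal. apply proof_irrelevance.
Qed.

Lemma r_inj n m : r n = r m -> n = m.
Proof.
  unfold r. intro H. pose proof (IZR_idx_pos n). pose proof (IZR_idx_pos m).
  assert (IZR (idx n) = IZR (idx m)).
  { rewrite <- (Rinv_inv (IZR (idx n))), <- (Rinv_inv (IZR (idx m))), H. reflexivity. }
  apply eq_IZR in H2. apply idx_inj; auto.
Qed.

Lemma d_refl x y : d x y = 0 <-> x = y.
Proof.
  split.
  - unfold d. intro H. pose proof (Rabs_pos (fst (emb x) - fst (emb y))). pose proof (nrm_pos (snd (emb x) - snd (emb y))).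
    assert (H2 : Rabs (fst (emb x) - fst (emb y)) = 0) by lra.
    assert (H3 : nrm (snd (emb x) - snd (emb y)) = 0) by lra.
    assert (H4 : fst (emb x) = fst (emb y)).
    { destruct (Req_dec (fst (emb x) - fst (emb y)) 0). lra. apply Rabs_no_R0 in H4. contradiction. }
    destruct x as [n|a], y as [m|b]; simpl in *.
    + f_equal. apply r_inj; auto.
    + pose proof (r_pos n). lra.
    + pose proof (r_pos m). lra.
    + f_equal. apply circ_eq. destruct (nrm_zero _ H3) as [z Hz].
      destruct a as [a Ha], b as [b Hb]; simpl in *.
      apply (unit_int_eq a b z); auto; lra.
  - intros ->. unfold d. rewrite !Rminus_diag, Rabs_R0. pose proof (nrm_int 0). simpl in H. lra.
Qed.

Definition X : Metric_Space := Build_Metric_Space Pt d d_pos d_sym d_refl d_tri.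

Lemma inv_lt a e : 0 < e -> / e < a -> / a < e.
Proof.
  intros He H. assert (0 < / e) by (apply Rinv_0_lt_compat; lra).
  rewrite <- (Rinv_inv e). apply Rinv_lt_contravar; [nra|lra].
Qed.

Lemma sqrt_diff u v : 0 <= u -> 0 <= v -> Rabs (sqrt u - sqrt v) * sqrt u <= Rabs (u - v).
Proof.
  intros Hu Hv. pose proof (sqrt_pos u). pose proof (sqrt_pos v).
  replace (u - v) with ((sqrt u - sqrt v) * (sqrt u + sqrt v)).
  2:{ pose proof (sqrt_sqrt u Hu). pose proof (sqrt_sqrt v Hv). nra. }
  rewrite Rabs_mult. rewrite (Rabs_right (sqrt u + sqrt v)) by lra.
  apply Rmult_le_compat_l. apply Rabs_pos. lra.
Qed.

Lemma sqrt_big u e : 0 < e -> / (e * e) < u -> / e < sqrt u.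
Proof.
  intros He H. assert (0 < / e) by (apply Rinv_0_lt_compat; lra).
  rewrite <- (sqrt_square (/ e)) by lra. apply sqrt_lt_1. nra.
  assert (0 < / (e*e)) by (apply Rinv_0_lt_compat; nra). lra.
  rewrite <- Rinv_mult. exact H.
Qed.

Lemma Q eps : 0 < eps -> exists delta, 0 < delta /\ forall n, r n < delta ->
  r (n+1) < eps /\ r (n-1) < eps /\
  Rabs (sqrt (IZR n) - sqrt (IZR (n+1))) < eps /\ Rabs (sqrt (IZR n) - sqrt (IZR (n-1))) < eps.
Proof.
  intros He. assert (Hie : 0 < / eps) by (apply Rinv_0_lt_compat; lra).
  assert (Hie2 : 0 < / (eps * eps)) by (apply Rinv_0_lt_compat; nra).
  set (M := / (eps * eps) + / eps + 3).
  exists (/ (3 * M + 1)). split. apply Rinv_0_lt_compat. unfold M; lra.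
  intros n Hn. unfold r in Hn.
  assert (Ha : 3 * M + 1 < IZR (idx n)).
  { destruct (Rlt_le_dec (3 * M + 1) (IZR (idx n))) as [h|h]; auto.
    exfalso. pose proof (IZR_idx_pos n). assert (/ (3*M+1) <= / IZR (idx n)). apply Rinv_le_contravar; auto; lra. lra. }
  assert (Hn2 : M < Rabs (IZR n)).
  { rewrite <- abs_IZR. assert (idx n <= 3 * Z.abs n + 1)%Z by (unfold idx; lia).
    apply IZR_le in H. rewrite plus_IZR, mult_IZR in H. simpl in H. lra. }
  assert (Hr : forall m, (Z.abs n - 1 <= Z.abs m)%Z -> r m < eps).
  { intros m Hm. unfold r. apply inv_lt; auto. pose proof (idx_ge m).
    assert (Z.abs n - 1 <= idx m)%Z by lia. apply IZR_le in H0. rewrite minus_IZR, abs_IZR in H0.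
    simpl in H0. unfold M in Hn2. lra. }
  split. apply Hr; lia. split. apply Hr; lia.
  destruct (Z_le_gt_dec 0 n) as [Hp|Hneg].
  - apply IZR_le in Hp. rewrite Rabs_right in Hn2 by lra.
    assert (Hs : / eps < sqrt (IZR n)). { apply sqrt_big; auto. unfold M in Hn2; lra. }
    assert (G : forall m, (0 <= m)%Z -> Rabs (IZR n - IZR m) = 1 -> Rabs (sqrt (IZR n) - sqrt (IZR m)) < eps).
    { intros m Hm E. apply IZR_le in Hm. pose proof (sqrt_diff (IZR n) (IZR m) Hp Hm). rewrite E in H.
      pose proof (Rabs_pos (sqrt (IZR n) - sqrt (IZR m))).
      destruct (Rlt_le_dec (Rabs (sqrt (IZR n) - sqrt (IZR m))) eps) as [h|h]; auto.
      exfalso. assert (eps * sqrt (IZR n) > 1).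
      { apply Rmult_lt_compat_l with (r := eps) in Hs; auto. rewrite Rinv_r in Hs by lra. lra. }
      pose proof (sqrt_pos (IZR n)). nra. }
    split; apply G.
    + apply le_IZR. rewrite plus_IZR. simpl. lra.
    + rewrite plus_IZR. replace (IZR n - (IZR n + 1)) with (- (1)) by ring. rewrite Rabs_Ropp, Rabs_R1. auto.
    + apply le_IZR. rewrite minus_IZR. simpl. unfold M in Hn2. lra.
    + rewrite minus_IZR. replace (IZR n - (IZR n - 1)) with 1 by ring. rewrite Rabs_R1. auto.
  - assert (Hz : forall m, (m <= 0)%Z -> sqrt (IZR m) = 0).
    { intros m Hm. apply sqrt_neg_0. apply IZR_le in Hm. exact Hm. }
    rewrite !Hz by lia. rewrite Rminus_diag, Rabs_R0. split; auto.
Qed.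

Definition mkC (t : R) : Pt := inr (exist (fun a => 0 <= a < 1) (fr t) (fr_range t)).

Definition hmap (s : Z -> Z) (b : R) (x : Pt) : Pt :=
  match x with inl n => inl (s n) | inr a => mkC (proj1_sig a + b) end.

Definition F := hmap (fun n => (n + 1)%Z) alpha.
Definition G := hmap (fun n => (n - 1)%Z) (- alpha).

Lemma mkC_eq (a : Circ) t z : t = proj1_sig a + IZR z -> mkC t = inr a.
Proof.
  intro E. unfold mkC. f_equal. apply circ_eq. simpl.
  destruct (fr_int t) as [w Hw]. destruct a as [a Ha]. simpl in *.
  apply (unit_int_eq _ _ (z + w)); auto. apply fr_range. rewrite Hw, E, plus_IZR. ring.
Qed.

Lemma d_CC (a b : Circ) : d (inr a) (inr b) = nrm (proj1_sig a - proj1_sig b).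
Proof. unfold d; simpl. rewrite Rminus_diag, Rabs_R0. ring. Qed.

Lemma d_OC n (a : Circ) : d (inl n) (inr a) = r n + nrm (th n - proj1_sig a).
Proof. unfold d; simpl. rewrite Rminus_0_r, Rabs_right. ring. left; apply r_pos. Qed.

Lemma d_OO n m : d (inl n) (inl m) = Rabs (r n - r m) + nrm (th n - th m).
Proof. reflexivity. Qed.

Lemma fr_diff s t : nrm (fr s - fr t) = nrm (s - t).
Proof.
  destruct (fr_int s) as [a Ha]. destruct (fr_int t) as [b Hb]. rewrite Ha, Hb.
  replace (s + IZR a - (t + IZR b)) with (s - t + IZR (a - b)) by (rewrite minus_IZR; ring).
  apply nrm_shift.
Qed.

Lemma fr_diff1 s t : nrm (s - fr t) = nrm (s - t).
Proof.
  destruct (fr_int t) as [b Hb]. rewrite Hb.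
  replace (s - (t + IZR b)) with (s - t + IZR (- b)) by (rewrite opp_IZR; ring).
  apply nrm_shift.
Qed.

Lemma gap a b : 1 <= a -> 1 <= b -> (a + 1 <= b \/ b <= a - 1) -> / (a * (a + 1)) <= Rabs (/ a - / b).
Proof.
  intros Ha Hb [H|H].
  - replace (/a - /b) with (/(a*(a+1)) + (b-a-1) * /((a+1)*b)) by (field; lra).
    assert (0 <= (b-a-1) * /((a+1)*b)). { apply Rmult_le_pos. lra. left; apply Rinv_0_lt_compat; nra. }
    assert (0 < /(a*(a+1))) by (apply Rinv_0_lt_compat; nra).
    rewrite Rabs_right; lra.
  - replace (/a - /b) with (- (/(a*(a+1)) + (a*a + a - a*b - 2*b) * /(a*b*(a+1)))) by (field; lra).
    assert (0 <= (a*a + a - a*b - 2*b) * /(a*b*(a+1))). { apply Rmult_le_pos. nra. left; apply Rinv_0_lt_compat; nra. }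
    assert (0 < /(a*(a+1))) by (apply Rinv_0_lt_compat; nra).
    rewrite Rabs_Ropp, Rabs_right; lra.
Qed.

Lemma iso n : exists delta, 0 < delta /\ forall y, d (inl n) y < delta -> y = inl n.
Proof.
  set (a := IZR (idx n)). pose proof (IZR_idx_pos n) as Ha. fold a in Ha.
  exists (/ (a * (a+1))). split. apply Rinv_0_lt_compat; nra.
  intros [m|b] Hd.
  - destruct (Z.eq_dec m n) as [->|Hmn]; auto. exfalso.
    rewrite d_OO in Hd. pose proof (nrm_pos (th n - th m)).
    assert (idx m <> idx n) by (intro E; apply Hmn, idx_inj, E).
    pose proof (IZR_idx_pos m).
    assert (a + 1 <= IZR (idx m) \/ IZR (idx m) <= a - 1).
    { destruct (Z_le_gt_dec (idx n + 1) (idx m)).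
      - left. apply IZR_le in l. rewrite plus_IZR in l. exact l.
      - right. assert (idx m <= idx n - 1)%Z by lia. apply IZR_le in H2. rewrite minus_IZR in H2. exact H2. }
    pose proof (gap a (IZR (idx m)) Ha H1 H2). unfold r in Hd. fold a in Hd. lra.
  - exfalso. rewrite d_OC in Hd. pose proof (nrm_pos (th n - proj1_sig b)).
    unfold r in Hd. fold a in Hd.
    assert (/ (a * (a+1)) <= / a). { apply Rinv_le_contravar; nra. }
    lra.
Qed.

Lemma cont_gen (s : Z -> Z) (b : R)
  (Hs : forall eps, 0 < eps -> exists delta, 0 < delta /\ forall n, r n < delta ->
          r (s n) < eps /\ Rabs (th n + b - th (s n)) < eps) :
  continuous_map (X := X) (Y := X) (hmap s b).
Proof.
  intros x eps He. destruct x as [n|a].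
  - destruct (iso n) as [del [Hd Hy]]. exists del. split; auto.
    intros y Hy'. simpl in Hy'. rewrite (Hy y Hy'). simpl.
    replace (d (inl (s n)) (inl (s n))) with 0. lra. symmetry. apply d_refl. auto.
  - destruct (Hs (eps/4)) as [d1 [Hd1 H1]]. lra.
    exists (Rmin d1 (eps/2)). split. apply Rmin_case; lra.
    intros [m|c] Hy; simpl in Hy |- *.
    + rewrite d_sym, d_OC in Hy. rewrite d_sym. unfold mkC. rewrite d_OC. simpl.
      pose proof (Rmin_l d1 (eps/2)). pose proof (Rmin_r d1 (eps/2)).
      pose proof (nrm_pos (th m - proj1_sig a)).
      destruct (H1 m) as [Hr Ht]. lra.
      rewrite fr_diff1.
      pose proof (nrm_tri (th m - proj1_sig a) (th (s m) - th m - b)) as T1.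
      replace (th m - proj1_sig a + (th (s m) - th m - b)) with (th (s m) - (proj1_sig a + b)) in T1 by ring.
      pose proof (nrm_abs (th (s m) - th m - b)) as T2. rewrite <- Rabs_Ropp in T2.
      replace (- (th (s m) - th m - b)) with (th m + b - th (s m)) in T2 by ring.
      pose proof (r_pos m). lra.
    + rewrite d_CC in Hy. unfold mkC. rewrite d_CC. simpl. rewrite fr_diff.
      replace (proj1_sig a + b - (proj1_sig c + b)) with (proj1_sig a - proj1_sig c) by ring.
      pose proof (Rmin_r d1 (eps/2)). lra.
Qed.

Lemma homeo : homeomorphism (X := X) F.
Proof.
  exists G. split; [|split; [|split]].
  - intros [n|a]; simpl.
    + f_equal. ring.
    + destruct (fr_int (proj1_sig a + alpha)) as [z Hz].
      apply (mkC_eq _ _ z). simpl. rewrite Hz. ring.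
  - intros [n|a]; simpl.
    + f_equal. ring.
    + destruct (fr_int (proj1_sig a + - alpha)) as [z Hz].
      apply (mkC_eq _ _ z). simpl. rewrite Hz. ring.
  - apply cont_gen. intros eps He. destruct (Q eps He) as [del [Hd H]]. exists del. split; auto.
    intros n Hn. destruct (H n Hn) as [A1 [A2 [A3 A4]]]. split; auto.
    unfold th. rewrite plus_IZR. replace (IZR n * alpha + sqrt (IZR n) + alpha - ((IZR n + 1) * alpha + sqrt (IZR n + 1)))
      with (sqrt (IZR n) - sqrt (IZR n + 1)) by ring. rewrite <- plus_IZR. auto.
  - apply cont_gen. intros eps He. destruct (Q eps He) as [del [Hd H]]. exists del. split; auto.
    intros n Hn. destruct (H n Hn) as [A1 [A2 [A3 A4]]]. split; auto.
    unfold th. rewrite minus_IZR. replace (IZR n * alpha + sqrt (IZR n) + - alpha - ((IZR n - 1) * alpha + sqrt (IZR n - 1)))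
      with (sqrt (IZR n) - sqrt (IZR n - 1)) by ring. rewrite <- minus_IZR. auto.
Qed.

Lemma even_sq (q : Z) : Z.even (q * q) = true -> exists q', q = (2 * q')%Z.
Proof.
  intro H. rewrite Z.even_mul in H. assert (Z.even q = true) by (destruct (Z.even q); auto).
  apply Z.even_spec in H0. destruct H0 as [m Hm]. exists m. lia.
Qed.

Lemma no_sqrt2_Z : forall k (p q : Z), Z.abs_nat p = k -> p <> 0%Z -> (2 * p * p <> q * q)%Z.
Proof.
  intro k. induction k as [k IH] using (well_founded_induction lt_wf).
  intros p q Hk Hp E.
  assert (Z.even (q*q) = true). { rewrite <- E. rewrite <- Z.mul_assoc, Z.even_mul. reflexivity. }
  destruct (even_sq q H) as [q' ->].
  assert (Z.even (p*p) = true).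
  { assert (p * p = 2 * (q' * q'))%Z by lia. rewrite H0, Z.even_mul. reflexivity. }
  destruct (even_sq p H0) as [p' ->].
  apply (IH (Z.abs_nat p') ltac:(lia) p' q' eq_refl ltac:(lia)). lia.
Qed.

Lemma irr p : p <> 0%Z -> 0 < nrm (IZR p * alpha).
Proof.
  intro Hp. destruct (Rle_lt_or_eq_dec 0 _ (nrm_pos (IZR p * alpha))) as [h|h]; auto.
  exfalso. symmetry in h. destruct (nrm_zero _ h) as [q Hq].
  assert (IZR (2 * p * p) = IZR (q * q)).
  { rewrite !mult_IZR, <- Hq. unfold alpha.
    replace (IZR p * sqrt 2 * (IZR p * sqrt 2)) with (IZR p * IZR p * (sqrt 2 * sqrt 2)) by ring.
    rewrite sqrt_sqrt by lra. simpl. ring. }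
  apply eq_IZR in H. apply (no_sqrt2_Z _ p q eq_refl Hp H).
Qed.

Lemma iter_inl k n : Nat.iter k F (inl n) = inl (n + Z.of_nat k)%Z.
Proof.
  induction k; simpl. f_equal; lia. rewrite IHk. simpl. f_equal. lia.
Qed.

Lemma iter_inr k (a : Circ) : exists b, Nat.iter k F (inr a) = inr b /\
  exists z, proj1_sig b = proj1_sig a + INR k * alpha + IZR z.
Proof.
  induction k.
  - exists a. split; auto. exists 0%Z. simpl. ring.
  - destruct IHk as [b [Hb [z Hz]]].
    change (Nat.iter (S k) F (inr a)) with (F (Nat.iter k F (inr a))). rewrite Hb.
    eexists. split. reflexivity. cbn [proj1_sig]. destruct (fr_int (proj1_sig b + alpha)) as [w Hw].
    exists (z + w)%Z. rewrite Hw, Hz, plus_IZR, S_INR. ring.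
Qed.

Lemma notS (x y : Pt) :
  (exists eps, 0 < eps /\ exists T, thick T /\ forall k, T k -> eps <= d (Nat.iter k F x) (Nat.iter k F y)) ->
  ~ @SProx X F x y.
Proof.
  intros [eps [He [T [HT H]]]] HS. destruct (HS eps He T HT) as [k [Hk Tk]].
  simpl in Hk. specialize (H k Tk). lra.
Qed.

Lemma thick_all : thick (fun _ => True).
Proof. intro L. exists 0%nat. auto. Qed.

Lemma nrm_lower A B : nrm A - Rabs B <= nrm (A + B).
Proof.
  pose proof (nrm_tri (A + B) (- B)). replace (A + B + - B) with A in H by ring.
  pose proof (nrm_abs (- B)). rewrite Rabs_Ropp in H0. lra.
Qed.

Lemma case_CC (a b : Circ) : a <> b -> ~ @SProx X F (inr a) (inr b).
Proof.
  intro Hab. apply notS. exists (nrm (proj1_sig a - proj1_sig b)). split.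
  { destruct (Rle_lt_or_eq_dec 0 _ (nrm_pos (proj1_sig a - proj1_sig b))) as [h|h]; auto.
    exfalso. apply Hab. symmetry in h. destruct (nrm_zero _ h) as [z Hz]. apply circ_eq.
    destruct a as [a Ha], b as [b Hb]; simpl in *. apply (unit_int_eq a b z); auto; lra. }
  exists (fun _ => True). split. apply thick_all. intros k _.
  destruct (iter_inr k a) as [a' [-> [z1 H1]]]. destruct (iter_inr k b) as [b' [-> [z2 H2]]].
  rewrite d_CC, H1, H2.
  replace (proj1_sig a + INR k * alpha + IZR z1 - (proj1_sig b + INR k * alpha + IZR z2))
    with (proj1_sig a - proj1_sig b + IZR (z1 - z2)) by (rewrite minus_IZR; ring).
  rewrite nrm_shift. lra.
Qed.

Lemma case_OO n m : n <> m -> ~ @SProx X F (inl n) (inl m).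
Proof.
  intro Hnm. apply notS.
  set (e := nrm (IZR (n - m) * alpha)).
  assert (He : 0 < e) by (apply irr; lia).
  exists (e / 2). split. lra.
  set (D := Rabs (IZR n - IZR m)).
  assert (HD : 0 <= D) by apply Rabs_pos.
  set (c := e / (2 * (D + 1))).
  assert (Hc : 0 < c) by (unfold c; apply Rdiv_lt_0_compat; lra).
  set (K := Z.to_nat (up (/ (c * c)) + Z.abs n + Z.abs m + 1)).
  assert (Hup : 0 < IZR (up (/ (c*c)))).
  { destruct (archimed (/ (c*c))). assert (0 < / (c*c)) by (apply Rinv_0_lt_compat; nra). lra. }
  apply lt_IZR in Hup.
  exists (fun k => (K <= k)%nat). split.
  { intro L. exists K. intros. lia. }
  intros k Hk. rewrite !iter_inl, d_OO.
  pose proof (Rabs_pos (r (n + Z.of_nat k) - r (m + Z.of_nat k))).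
  assert (Hn : (up (/ (c*c)) <= n + Z.of_nat k)%Z) by lia.
  assert (Hm : (0 <= m + Z.of_nat k)%Z) by lia.
  set (u := IZR (n + Z.of_nat k)). set (v := IZR (m + Z.of_nat k)).
  assert (Hu : / (c*c) < u).
  { unfold u. apply IZR_le in Hn. destruct (archimed (/ (c*c))). lra. }
  assert (Hu0 : 0 <= u) by (assert (0 < / (c*c)) by (apply Rinv_0_lt_compat; nra); lra).
  assert (Hv0 : 0 <= v) by (unfold v; apply IZR_le; lia).
  pose proof (sqrt_diff u v Hu0 Hv0) as SD.
  assert (Euv : u - v = IZR n - IZR m) by (unfold u, v; rewrite !plus_IZR; ring).
  rewrite Euv in SD. fold D in SD.
  pose proof (sqrt_big u c Hc Hu) as SB.
  assert (Hic : / c = 2 * (D + 1) / e). { unfold c. field. lra. }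
  assert (Hdel : Rabs (sqrt u - sqrt v) <= e / 2).
  { destruct (Rle_lt_dec (Rabs (sqrt u - sqrt v)) (e/2)) as [h|h]; auto. exfalso.
    rewrite Hic in SB.
    assert (e / 2 * (2 * (D + 1) / e) = D + 1) by (field; lra).
    assert (e / 2 * (2 * (D + 1) / e) < Rabs (sqrt u - sqrt v) * sqrt u).
    { assert (0 < 2 * (D + 1) / e) by (unfold Rdiv; apply Rmult_lt_0_compat; [lra|apply Rinv_0_lt_compat; lra]). apply Rmult_le_0_lt_compat; lra. }
    lra. }
  assert (Eth : th (n + Z.of_nat k) - th (m + Z.of_nat k) = IZR (n - m) * alpha + (sqrt u - sqrt v)).
  { unfold th, u, v. rewrite !plus_IZR, minus_IZR. ring. }
  rewrite Eth. pose proof (nrm_lower (IZR (n - m) * alpha) (sqrt u - sqrt v)). fold e in H0. lra.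
Qed.

Lemma case_OC n (a : Circ) : ~ @SProx X F (inl n) (inr a).
Proof.
  apply notS. exists (/4). split. lra.
  set (c := IZR n * alpha - proj1_sig a).
  exists (fun k => /4 <= nrm (c + sqrt (IZR (n + Z.of_nat k)))). split.
  - intro L. set (J := up (INR L + IZR (Z.abs n) + 1 + c)).
    set (A := IZR J + /4 - c).
    assert (HA : INR L + IZR (Z.abs n) + 1 < A).
    { unfold A, J. destruct (archimed (INR L + IZR (Z.abs n) + 1 + c)). lra. }
    pose proof (pos_INR L). assert (Habs : 0 <= IZR (Z.abs n)) by (apply IZR_le; lia).
    assert (Hn : IZR n <= IZR (Z.abs n)) by (apply IZR_le; lia).
    set (m0 := up (A * A)).
    assert (Hm0 : A * A < IZR m0 <= A * A + 1) by (unfold m0; destruct (archimed (A*A)); lra).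
    assert (Hm0n : (n < m0)%Z). { apply lt_IZR. nra. }
    exists (Z.to_nat (m0 - n)). intros k Hk.
    replace (n + Z.of_nat (Z.to_nat (m0 - n) + k))%Z with (m0 + Z.of_nat k)%Z by lia.
    assert (Hk' : INR k + 1 <= INR L) by (rewrite <- S_INR; apply le_INR; lia).
    set (w := IZR (m0 + Z.of_nat k)).
    assert (Hw : A * A < w <= A * A + A).
    { unfold w. rewrite plus_IZR, <- INR_IZR_INZ. pose proof (pos_INR k). lra. }
    assert (HA0 : 0 <= A) by lra.
    assert (S1 : A < sqrt w).
    { rewrite <- (sqrt_square A HA0). apply sqrt_lt_1; nra. }
    assert (S2 : sqrt w <= A + /2).
    { rewrite <- (sqrt_square (A + /2)) by lra. apply sqrt_le_1; nra. }
    apply (nrm_quarter _ J). unfold A in S1, S2. lra.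
  - intros k Hk. rewrite iter_inl. destruct (iter_inr k a) as [b [-> [z Hz]]].
    rewrite d_OC, Hz.
    replace (th (n + Z.of_nat k) - (proj1_sig a + INR k * alpha + IZR z))
      with (c + sqrt (IZR (n + Z.of_nat k)) + IZR (- z)).
    2:{ unfold c, th. rewrite opp_IZR, plus_IZR, INR_IZR_INZ. ring. }
    rewrite nrm_shift. pose proof (r_pos (n + Z.of_nat k)). lra.
Qed.

Lemma SProx_sym x y : @SProx X F x y -> @SProx X F y x.
Proof.
  intros H eps He T HT. destruct (H eps He T HT) as [k [Hk Tk]]. exists k. split; auto.
  simpl in *. rewrite d_sym. auto.
Qed.

Lemma SProx_char x y : @SProx X F x y <-> x = y.
Proof.
  split.
  - intro H. destruct x as [n|a], y as [m|b].
    + destruct (Z.eq_dec n m) as [->|h]; auto. exfalso; apply (case_OO n m h H).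
    + exfalso; apply (case_OC n b H).
    + exfalso; apply (case_OC m a (SProx_sym _ _ H)).
    + destruct (classic (a = b)) as [->|h]; auto. exfalso; apply (case_CC a b h H).
  - intros -> eps He T HT. destruct (HT 1%nat) as [a0 Ha]. exists (a0 + 0)%nat. split.
    simpl. replace (d (Nat.iter (a0 + 0) F y) (Nat.iter (a0 + 0) F y)) with 0. lra.
    symmetry. apply d_refl. auto. apply Ha. lia.
Qed.

Definition c0 : Circ := exist (fun a => 0 <= a < 1) 0 (conj (Rle_refl 0) Rlt_0_1).

Lemma prox_wit : @Prox X F (inl 0%Z) (inr c0).
Proof.
  intros eps He N. simpl.
  set (j := (Z.to_nat (up (/ eps)) + N + 1)%nat).
  exists (j * j)%nat. split. nia.
  rewrite iter_inl. destruct (iter_inr (j*j) c0) as [b [-> [z Hz]]].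
  rewrite d_OC, Hz. simpl proj1_sig.
  replace (th (0 + Z.of_nat (j * j)) - (0 + INR (j * j) * alpha + IZR z)) with (INR j + IZR (- z)).
  2:{ unfold th. rewrite Z.add_0_l, <- INR_IZR_INZ, mult_INR, sqrt_square by apply pos_INR.
      rewrite opp_IZR. ring. }
  rewrite nrm_shift. replace (INR j) with (IZR (Z.of_nat j)) by (rewrite INR_IZR_INZ; auto).
  rewrite nrm_int, Rplus_0_r.
  unfold r. apply inv_lt; auto.
  destruct (archimed (/ eps)).
  assert (0 < / eps) by (apply Rinv_0_lt_compat; lra).
  assert (Z.of_nat j <= idx (0 + Z.of_nat (j*j)))%Z by (unfold idx; nia).
  apply IZR_le in H2. rewrite <- INR_IZR_INZ in H2.
  assert (IZR (up (/eps)) <= INR j).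
  { rewrite INR_IZR_INZ. apply IZR_le. unfold j. lia. }
  lra.
Qed.

Definition cc (t : R) : Circ := exist (fun a => 0 <= a < 1) (fr t) (fr_range t).

Lemma d_inr (a : Circ) y : d (inr a) y = Rabs (0 - fst (emb y)) + nrm (proj1_sig a - snd (emb y)).
Proof. reflexivity. Qed.

Lemma min_list (Rf : R -> R) (l : list R) : (forall t, 0 < Rf t) ->
  exists del, 0 < del /\ forall t, In t l -> del <= Rf t.
Proof.
  intro HR. induction l as [|t l IH].
  - exists 1. split. lra. intros t [].
  - destruct IH as [del [Hd H]]. exists (Rmin del (Rf t)). split.
    apply Rmin_case; auto.
    intros u [<-|Hu]. apply Rmin_r. apply Rle_trans with del. apply Rmin_l. auto.
Qed.

Lemma compactX : compact_space X.
Proof.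
  intros I U HU Hcov. simpl in *.
  assert (pick : forall x : Pt, {i | U i x}).
  { intro x. apply constructive_indefinite_description. apply Hcov. }
  set (pk := fun x => proj1_sig (pick x)).
  assert (Hpk : forall x, U (pk x) x) by (intro x; unfold pk; destruct (pick x); auto).
  assert (rad : forall t : R, {rho | 0 < rho /\ forall y, d (inr (cc t)) y < rho -> U (pk (inr (cc t))) y}).
  { intro t. apply constructive_indefinite_description.
    destruct (HU (pk (inr (cc t))) (inr (cc t)) (Hpk _)) as [rho [Hr H]]. exists rho. split; auto. }
  set (Rd := fun t => proj1_sig (rad t)).
  assert (HRd : forall t, 0 < Rd t /\ forall y, d (inr (cc t)) y < Rd t -> U (pk (inr (cc t))) y).
  { intro t. unfold Rd. destruct (rad t); auto. }
  set (fam := mkfamily (fun _ => True) (fun t s => nrm (s - t) < Rd t / 2) (fun _ _ => Logic.I)).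
  assert (Hfam : covering_open_set (fun c => 0 <= c <= 1) fam).
  { split.
    - intros s _. exists s. simpl. rewrite Rminus_diag. pose proof (nrm_int 0). simpl in H.
      rewrite H. destruct (HRd s). lra.
    - intros t s Hs. simpl in Hs.
      assert (Hp : 0 < Rd t / 2 - nrm (s - t)) by lra.
      exists (mkposreal _ Hp). intros y Hy. unfold disc in Hy. simpl in Hy |- *.
      pose proof (nrm_lip (y - t) (s - t)). replace (y - t - (s - t)) with (y - s) in H by ring.
      pose proof (Rle_abs (nrm (y - t) - nrm (s - t))). lra. }
  destruct (compact_P3 0 1 fam Hfam) as [Dm [Hcf [l Hl]]].
  destruct (min_list (fun t => Rd t / 2) l) as [del [Hdel Hdl]].
  { intro t. destruct (HRd t). lra. }
  assert (Near : forall y, fst (emb y) < del -> exists t, In t l /\ U (pk (inr (cc t))) y).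
  { intros y Hy. set (p := snd (emb y)).
    destruct (Hcf (fr p)) as [t [Ht Dt]]. pose proof (fr_range p). lra.
    simpl in Ht. assert (Hin : In t l) by (apply Hl; split; auto; exact Logic.I).
    exists t. split; auto. apply (proj2 (HRd t)).
    rewrite d_inr. simpl proj1_sig.
    assert (E : nrm (fr t - p) = nrm (fr p - t)).
    { destruct (fr_int t) as [z1 H1]; destruct (fr_int p) as [z2 H2]; rewrite H1, H2.
      replace (t + IZR z1 - p) with (t - p + IZR z1) by ring.
      replace (p + IZR z2 - t) with (- (t - p) + IZR z2) by ring. rewrite !nrm_shift, nrm_opp. auto. }
    fold p. rewrite E. specialize (Hdl t Hin).
    assert (0 <= fst (emb y)) by (destruct y; simpl; [left; apply r_pos|lra]).
    rewrite Rabs_left1 by lra. lra. }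
  set (B := up (/ del)).
  exists (map (fun t => pk (inr (cc t))) l ++ map (fun k => pk (inl (Z.of_nat k - B)%Z)) (seq 0 (Z.to_nat (2 * B)))).
  intro x. destruct (Rlt_le_dec (fst (emb x)) del) as [h|h].
  - destruct (Near x h) as [t [Ht Ut]]. exists (pk (inr (cc t))). split; auto.
    apply in_or_app. left. apply (in_map (fun t => pk (inr (cc t)))). auto.
  - destruct x as [n|a]; simpl in h; [|lra].
    assert (Hidx : IZR (idx n) <= / del).
    { unfold r in h. pose proof (IZR_idx_pos n).
      rewrite <- (Rinv_inv (IZR (idx n))). apply Rinv_le_contravar; auto. }
    assert (Hb : (Z.abs n < B)%Z).
    { apply lt_IZR. pose proof (idx_ge n). apply IZR_le in H. unfold B. destruct (archimed (/del)). lra. }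
    exists (pk (inl n)). split; auto. apply in_or_app. right.
    assert (E : pk (inl n) = pk (inl (Z.of_nat (Z.to_nat (n + B)) - B)%Z)) by (do 2 f_equal; lia). rewrite E.
    apply (in_map (fun k => pk (inl (Z.of_nat k - B)%Z))). apply in_seq. lia.
Qed.

Theorem mainTheorem13 :
  exists (X : Metric_Space) (f : Base X -> Base X),
    compact_space X /\ homeomorphism f /\
    (forall x y, SProx f x y <-> x = y) /\
    ~ (forall x y, Prox f x y <-> x = y).
Proof.
  exists X, F. split; [exact compactX|]. split; [exact homeo|]. split; [exact SProx_char|].
  intro H. pose proof (proj1 (H (inl 0%Z) (inr c0)) prox_wit). discriminate.
Qed.
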